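(* There is a function $\varepsilon(n)$ with $\varepsilon(n)\to 0$ as $n\to\infty$ such that every finite group $G$ of order $n$ satisfies $C(G)\leq n^{(\frac{1}{2}+\varepsilon(n))\log_2 n}$; i.e. $C(G)\leq n^{(\frac12+o(1))\log_2 n}$.
   Context: $C(G)$, the capacity of a group $G$, is the number of isomorphism classes of groups $H$ that are $r$-images of $G$, i.e. for which there exist homomorphisms $g:G\to H$, $f:H\to G$ with $g\circ f=\mathrm{id}_H$. *)

(* Defs.v *)
From mathcomp Require Import all_boot all_fingroup.
From Stdlib Require Import Reals.

Set Implicit Arguments.
Unset Strict Implicit.
Unset Printing Implicit Defensive.

Local Open Scope group_scope.

Definition grp_hom (gT hT : finGroupType) (phi : gT -> hT) : Prop :=
  forall x y : gT, phi (x * y) = phi x * phi y.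

Definition grp_isomorphic (hT kT : finGroupType) : Prop :=
  exists phi : hT -> kT, grp_hom phi /\ bijective phi.

Definition r_image (gT hT : finGroupType) : Prop :=
  exists (g : gT -> hT) (f : hT -> gT),
    [/\ grp_hom g, grp_hom f & forall y : hT, g (f y) = y].

(* "C(G) <= x": every family of pairwise non-isomorphic r-images of G
   (i.e. every set of distinct isomorphism classes of r-images) has at most x
   members. *)
Definition capacity_le (gT : finGroupType) (x : R) : Prop :=
  forall (k : nat) (H : 'I_k -> finGroupType),
    (forall i, r_image gT (H i)) ->
    (forall i j, i <> j -> ~ grp_isomorphic (H i) (H j)) ->
    (INR k <= x)%R.

(* Main.v *)
Require Import Defs.
From mathcomp Require Import all_boot all_fingroup zify.
From Stdlib Require Import IndefiniteDescription.
Set Implicit Arguments. Unset Strict Implicit. Unset Printing Implicit Defensive.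
Local Open Scope group_scope.
Lemma hom1 (gT hT : finGroupType) (g : gT -> hT) : grp_hom g -> g 1 = 1.
Proof.
move=> hg; have := hg 1 1; rewrite mulg1 => e.
by rewrite -[g 1 in LHS](mulKg (g 1)) -e mulVg.
Qed.

Lemma homV (gT hT : finGroupType) (g : gT -> hT) x : grp_hom g -> g x^-1 = (g x)^-1.
Proof.
move=> hg; apply: (mulgI (g x)); rewrite -hg !mulgV; exact: hom1.
Qed.

Lemma iso_of_img (gT h1 h2 : finGroupType) (g1 : gT -> h1) f1 (g2 : gT -> h2) f2 :
  grp_hom g1 -> grp_hom f1 -> (forall y, g1 (f1 y) = y) ->
  grp_hom g2 -> grp_hom f2 -> (forall y, g2 (f2 y) = y) ->
  f1 @: [set: h1] = f2 @: [set: h2] -> grp_isomorphic h1 h2.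
Proof.
move=> hg1 hf1 e1 hg2 hf2 e2 E.
exists (fun y => g2 (f1 y)); split.
  by move=> x y; rewrite hf1 hg2.
exists (fun z => g1 (f2 z)) => y.
  have : f1 y \in f2 @: [set: h2] by rewrite -E imset_f ?inE.
  by case/imsetP=> z _ E'; rewrite E' e2 -E' e1.
have : f2 y \in f1 @: [set: h1] by rewrite E imset_f ?inE.
by case/imsetP=> z _ E'; rewrite E' e1 -E' e2.
Qed.

Lemma iso_of_ker (gT h1 h2 : finGroupType) (g1 : gT -> h1) f1 (g2 : gT -> h2) f2 :
  grp_hom g1 -> grp_hom f1 -> (forall y, g1 (f1 y) = y) ->
  grp_hom g2 -> grp_hom f2 -> (forall y, g2 (f2 y) = y) ->
  (forall x, (g1 x == 1) = (g2 x == 1)) -> grp_isomorphic h1 h2.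
Proof.
move=> hg1 hf1 e1 hg2 hf2 e2 E.
have key : forall (ha hb : finGroupType) (ga : gT -> ha) fa (gb : gT -> hb) fb,
  grp_hom ga -> grp_hom fa -> (forall y, ga (fa y) = y) ->
  grp_hom gb -> grp_hom fb -> (forall y, gb (fb y) = y) ->
  (forall x, (ga x == 1) = (gb x == 1)) -> forall y, ga (fb (gb (fa y))) = y.
  move=> ha hb ga fa gb fb hga hfa ea hgb hfb eb EE y.
  set x := fa y; set w := fb (gb x).
  have : gb (x^-1 * w) == 1 by rewrite hgb homV // /w eb mulVg.
  rewrite -EE hga homV // /x ea => /eqP h.
  by rewrite -[ga w](mulKVg y) h mulg1.
exists (fun y => g2 (f1 y)); split.
  by move=> x y; rewrite hf1 hg2.
exists (fun z => g1 (f2 z)) => y; first exact: (key _ _ g1 f1 g2 f2 hg1 hf1 e1 hg2 hf2 e2 E) y.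
exact: (key _ _ g2 f2 g1 f1 hg2 hf2 e2 hg1 hf1 e1 (fun x => esym (E x))) y.
Qed.

Section Chain.
Variables (gT : finGroupType) (cl : seq gT -> {group gT}) (K : {group gT}).
Hypothesis clsub : forall s, all (mem K) s -> cl s \subset K.
Hypothesis clin : forall x s, x \in cl (x :: s).
Hypothesis clmono : forall x s, cl s \subset cl (x :: s).

Lemma chain_gen : exists s, [/\ all (mem K) s, cl s = K :> {set gT} & 2 ^ size s <= #|K|]%N.
Proof.
suff: forall m s, all (mem K) s -> (2 ^ size s <= #|cl s|)%N -> (#|K| - #|cl s| <= m)%N ->
  exists s, [/\ all (mem K) s, cl s = K :> {set gT} & 2 ^ size s <= #|K|]%N.
  move=> H; apply: (H #|K| [::]) => //=; [exact: cardG_gt0 | exact: leq_subr].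
elim=> [|m IH] s aK le2 lem.
  have sub := clsub aK.
  have e : cl s = K :> {set gT}.
    by apply/eqP; rewrite eqEcard sub /= -subn_eq0 -leqn0.
  exists s; split => //; by rewrite -e.
have sub := clsub aK.
case: (boolP (K \subset cl s)) => [sKc|].
  have e : cl s = K :> {set gT} by apply/eqP; rewrite eqEsubset sub.
  exists s; split => //; by rewrite -e.
case/subsetPn=> x xK xnc.
have aK' : all (mem K) (x :: s) by rewrite /= xK.
have pr : cl s \proper cl (x :: s) by apply/properP; split; [exact: clmono | exists x].
have lt1 : (1 < #|cl (x :: s) : cl s|)%N by rewrite indexg_gt1; case/andP: pr.
have La := LagrangeI (cl (x :: s)) (cl s).
rewrite (setIidPr (clmono x s)) in La.
apply: (IH (x :: s) aK').
  rewrite /= expnS -La mulnC; apply: leq_mul => //.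
have := proper_card pr; have := subset_leq_card (clsub aK'); lia.
Qed.

Lemma pad_gen s j : all (mem K) s -> cl s = K :> {set gT} -> cl (nseq j 1 ++ s) = K :> {set gT}.
Proof.
move=> aK e; elim: j => //= j IH.
apply/eqP; rewrite eqEsubset clsub /=; last first.
  by rewrite group1 all_cat aK andbT; apply/allP=> y /nseqP [-> _]; exact: group1.
by rewrite -{1}IH clmono.
Qed.

Lemma tuple_gen n : (#|K| ^ 2 <= n)%N -> exists t : (trunc_log 4 n).-tuple gT, cl t = K :> {set gT}.
Proof.
move=> h.
have [s [aK e c]] := chain_gen.
have sz : (size s <= trunc_log 4 n)%N.
  apply: trunc_log_max => //; apply: leq_trans h; rewrite (_ : 4 = 2 ^ 2)%N // -expnM mulnC expnM.
  by rewrite leq_exp2r.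
set l := trunc_log 4 n.
have szt : size (nseq (l - size s) (1 : gT) ++ s) == l.
  by rewrite size_cat size_nseq subnK.
exists (Tuple szt); exact: pad_gen.
Qed.
End Chain.

Lemma count_inj (gT : finGroupType) k (X : 'I_k -> {set gT}) (S : {set 'I_k})
  (cl : seq gT -> {set gT}) l :
  (forall i j, X i = X j -> i = j) ->
  (forall i, i \in S -> exists t : l.-tuple gT, cl t = X i) -> (#|S| <= #|gT| ^ l)%N.
Proof.
move=> inj ex.
pose t i := odflt (nseq_tuple l (1 : gT)) [pick t : l.-tuple gT | cl t == X i].
have tP : forall i, i \in S -> cl (t i) = X i.
  move=> i /ex [u eu]; rewrite /t; case: pickP => [v /eqP //|/(_ u)].
  by rewrite eu eqxx.
rewrite -(card_in_imset (f := t)); last first.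
  by move=> i j iS jS e; apply: inj; rewrite -tP // -tP // e.
by rewrite -card_tuple max_card.
Qed.

Definition cl1 (gT : finGroupType) (s : seq gT) : {group gT} := <<[set:: s]>>%G.
Definition cl2 (gT : finGroupType) (s : seq gT) : {group gT} :=
  <<class_support [set:: s] [set: gT]>>%G.

Lemma cl1_tuple (gT : finGroupType) (K : {group gT}) n :
  (#|K| ^ 2 <= n)%N -> exists t : (trunc_log 4 n).-tuple gT, cl1 t = K :> {set gT}.
Proof.
apply: tuple_gen.
- move=> s aK; rewrite gen_subG; apply/subsetP=> x; rewrite inE => xs.
  exact: (allP aK).
- by move=> x s; apply: mem_gen; rewrite inE mem_head.
- move=> x s; apply: genS; apply/subsetP=> y; rewrite !inE => ->; exact: orbT.
Qed.

Lemma cl2_tuple (gT : finGroupType) (K : {group gT}) n : K <| [set: gT] ->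
  (#|K| ^ 2 <= n)%N -> exists t : (trunc_log 4 n).-tuple gT, cl2 t = K :> {set gT}.
Proof.
move=> nK; apply: tuple_gen.
- move=> s aK; rewrite gen_subG; apply: class_support_sub_norm; last exact: normal_norm.
  apply/subsetP=> x; rewrite inE => xs; exact: (allP aK).
- move=> x s; apply: mem_gen.
  have := @memJ_class_support _ [set:: x :: s] [set: gT] x 1; rewrite conjg1; apply.
    by rewrite !inE eqxx.
  by rewrite inE.
- move=> x s; apply: genS; apply: imset2S => //.
  apply/subsetP=> y; rewrite !inE => ->; exact: orbT.
Qed.

Lemma count_bound (gT : finGroupType) k (H : 'I_k -> finGroupType) :
  (forall i, r_image gT (H i)) -> (forall i j, i <> j -> ~ grp_isomorphic (H i) (H j)) ->
  (k <= #|gT| ^ trunc_log 4 #|gT| +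
        (if #|gT| == 1 then 0 else #|gT| ^ trunc_log 4 #|gT|))%N.
Proof.
move=> hr hd.
have gex : forall i, {g : gT -> H i & {f : H i -> gT |
     [/\ grp_hom g, grp_hom f & forall y, g (f y) = y]}}.
  move=> i; have [g Hg] := constructive_indefinite_description _ (hr i).
  have [f Hf] := constructive_indefinite_description _ Hg.
  by exists g; exists f.
pose g i := projT1 (gex i); pose f i := sval (projT2 (gex i)).
have hg : forall i, grp_hom (g i) by move=> i; case: (svalP (projT2 (gex i))).
have hf : forall i, grp_hom (f i) by move=> i; case: (svalP (projT2 (gex i))).
have ef : forall i y, g i (f i y) = y by move=> i; case: (svalP (projT2 (gex i))).
pose gm i : {morphism [set: gT] >-> H i} := Morphism (in2W (hg i)).
pose fm i : {morphism [set: H i] >-> gT} := Morphism (in2W (hf i)).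
pose K i := (fm i @* [set: H i])%G.
pose N i := ('ker (gm i))%G.
have Kinj : forall i j, K i = K j :> {set gT} -> i = j.
  move=> i j e; apply/eqP/negPn/negP => /eqP nij; apply: (hd i j nij).
  apply: (iso_of_img (hg i) (hf i) (ef i) (hg j) (hf j) (ef j)).
  by move: e; rewrite /K /= !morphimEdom.
have Ninj : forall i j, N i = N j :> {set gT} -> i = j.
  move=> i j e; apply/eqP/negPn/negP => /eqP nij; apply: (hd i j nij).
  apply: (iso_of_ker (hg i) (hf i) (ef i) (hg j) (hf j) (ef j)).
  move=> x; have xT : x \in [set: gT] by rewrite inE.
  apply/eqP/eqP => h.
    have : x \in N i by apply/kerP.
    by rewrite e => /kerP; apply.
  have : x \in N j by apply/kerP.
  by rewrite -e => /kerP; apply.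
set n := #|gT|.
have n0 : (0 < n)%N by apply/card_gt0P; exists 1.
have card : forall i, (#|K i| * #|N i| = n)%N.
  move=> i.
  have injf : 'injm (fm i).
    apply/injmP=> a b _ _ h; rewrite -(ef i a) -(ef i b); congr (g i _); exact: h.
  have -> : #|K i| = #|H i| by rewrite /K /= card_injm // cardsT.
  have im : gm i @* [set: gT] = [set: H i].
    apply/setP=> y; rewrite inE; have <- := ef i y.
    by apply: mem_morphim; rewrite inE.
  have := card_morphim (gm i) [set: gT]; rewrite im setIid cardsT => ->.
  have := LagrangeI [set: gT] (N i); rewrite setTI cardsT /n => <-; exact: mulnC.
pose S1 := [set i | (#|K i| ^ 2 <= n)%N].
pose S2 := [set i | (#|N i| ^ 2 < n)%N].
have cover : [set: 'I_k] \subset S1 :|: S2.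
  apply/subsetP=> i _; rewrite !inE; case: (leqP (#|K i| ^ 2) n) => //= lt.
  rewrite -(ltn_pmul2l n0).
  have : (n * #|N i| ^ 2 < #|K i| ^ 2 * #|N i| ^ 2)%N by rewrite ltn_pmul2r // expn_gt0 cardG_gt0.
  by rewrite -expnMn card mulnn.
have c1 : (#|S1| <= n ^ trunc_log 4 n)%N.
  apply: (count_inj (X := fun i => gval (K i)) (cl := fun s => gval (cl1 s))).
    exact: Kinj.
  by move=> i; rewrite inE => /cl1_tuple.
have c2 : (#|S2| <= (if n == 1 then 0 else n ^ trunc_log 4 n))%N.
  case: eqP => [n1|_].
    rewrite leqn0 cards_eq0; apply/eqP/setP=> i; rewrite !inE n1.
    by have := cardG_gt0 (N i); case: #|N i| => [|[|]].
  apply: (count_inj (X := fun i => gval (N i)) (cl := fun s => gval (cl2 s))).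
    exact: Ninj.
  move=> i; rewrite inE => /ltnW; apply: cl2_tuple; exact: ker_normal.
have := subset_leq_card cover; rewrite cardsT card_ord cardsU => h.
apply: leq_trans h _; apply: leq_trans (leq_subr _ _) _; exact: leq_add.
Qed.

Local Close Scope group_scope.
From Stdlib Require Import Reals Lra.
Local Open Scope R_scope.

Lemma INR_expn a b : INR (expn a b) = INR a ^ b.
Proof.
elim: b => [|b IH]; first by rewrite expn0.
by rewrite expnS mult_INR IH /=.
Qed.

Lemma ln_le' x y : 0 < x -> x <= y -> ln x <= ln y.
Proof.
move=> x0 [xy|<-]; last exact: Rle_refl.
by apply: Rlt_le; apply: ln_increasing.
Qed.

Lemma real_bound (n k : nat) : (0 < n)%nat ->
  leq k (addn (expn n (trunc_log 4 n)) (if n == 1%nat then 0%nat else expn n (trunc_log 4 n))) ->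
  INR k <= Rpower (INR n) ((1 / 2 + ln 2 / ln (INR n)) * (ln (INR n) / ln 2)).
Proof.
move=> n0 hk.
case: eqP hk => [->|n1] hk.
  rewrite /Rpower ln_1 Rmult_0_r exp_0.
  have : (k <= 1)%coq_nat by apply/leP; rewrite trunc_log1 in hk.
  by move/le_INR.
have n2 : (2 <= n)%nat by case: n n0 n1 {hk} => [|[|]].
set l := trunc_log 4 n.
have hl : (expn 4 l <= n)%nat by apply: trunc_logP.
have c0 : 0 < ln 2 by rewrite -ln_1; apply: ln_increasing; lra.
have nR : 2 <= INR n by have := le_INR 2 n (elimT leP n2); rewrite /=; lra.
set L := ln (INR n).
have Lc : ln 2 <= L by apply: ln_le'; lra.
have hl' : 2 * ln 2 * INR l <= L.
  have h4 : INR 4 ^ l <= INR n by rewrite -INR_expn; apply: le_INR; apply/leP.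
  have := @ln_le' _ _ (pow_lt (INR 4) l ltac:(simpl; lra)) h4.
  rewrite ln_pow; last by simpl; lra.
  have -> : INR 4 = 2 * 2 by simpl; lra.
  rewrite ln_mult -/L; nra.
have hkR : INR k <= 2 * exp (INR l * L).
  have : (k <= expn n l + expn n l)%coq_nat by apply/leP.
  move/le_INR; rewrite plus_INR INR_expn -Rpower_pow; last lra.
  rewrite /Rpower -/L; lra.
apply: Rle_trans hkR _.
have -> : 2 * exp (INR l * L) = exp (ln 2 + INR l * L) by rewrite exp_plus exp_ln //; lra.
rewrite /Rpower -/L.
have L0 : 0 < L by lra.
have -> : (1 / 2 + ln 2 / L) * (L / ln 2) * L = L * (L / (2 * ln 2)) + L by field; lra.
have M : INR l <= L / (2 * ln 2).
  have : L / (2 * ln 2) - INR l = (L - 2 * ln 2 * INR l) * / (2 * ln 2) by field; lra.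
  have : 0 <= (L - 2 * ln 2 * INR l) * / (2 * ln 2).
    apply: Rmult_le_pos; first lra.
    apply: Rlt_le; apply: Rinv_0_lt_compat; lra.
  lra.
have : INR l * L <= L / (2 * ln 2) * L by apply: Rmult_le_compat_r; lra.
move=> h.
have [e|e] : ln 2 + INR l * L < L * (L / (2 * ln 2)) + L \/ ln 2 + INR l * L = L * (L / (2 * ln 2)) + L by lra.
  exact: Rlt_le (exp_increasing _ _ e).
by rewrite e; apply: Rle_refl.
Qed.

Lemma eps_cv : Un_cv (fun n => ln 2 / ln (INR n)) 0.
Proof.
move=> e e0.
have c0 : 0 < ln 2 by rewrite -ln_1; apply: ln_increasing; lra.
have [N HN] := INR_unbounded (exp (ln 2 / e)).
exists N => n nN.
have ex0 := exp_pos (ln 2 / e).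
have nR : exp (ln 2 / e) < INR n.
  have := le_INR _ _ nN; lra.
have L1 : ln 2 / e < ln (INR n).
  rewrite -[X in X < _]ln_exp; exact: ln_increasing.
have c1 : 0 < ln 2 / e by apply: Rdiv_lt_0_compat.
set L := ln (INR n) in L1 *.
have L0 : 0 < L by lra.
rewrite /R_dist Rminus_0_r Rabs_right; last first.
  apply: Rle_ge; apply: Rlt_le; exact: Rdiv_lt_0_compat.
have : ln 2 < e * L.
  have : ln 2 / e * e = ln 2 by field; lra.
  nra.
move=> h.
apply: (Rmult_lt_reg_r L) => //.
have -> : ln 2 / L * L = ln 2 by field; lra.
lra.
Qed.

Theorem proposition3p1 :
  exists eps : nat -> R,
    Un_cv eps 0%R /\
    forall (gT : finGroupType),
      capacity_le gT
        (Rpower (INR #|gT|)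
           ((1 / 2 + eps #|gT|) * (ln (INR #|gT|) / ln 2))%R).
Proof.
exists (fun n => ln 2 / ln (INR n)); split; first exact: eps_cv.
move=> gT k H hr hd.
apply: real_bound; first by apply/card_gt0P; exists 1%g.
exact: count_bound.
Qed.
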